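(* Let $\Lambda$ be a strongly connected $k$-graph and $(G,\Lambda)$ a locally faithful self-similar action. Let $p,q,p',q'\in\mathbb{N}^k$ with $p-q=p'-q'$, and suppose $(p,q,g)\in\Sigma^v_{G,\Lambda}$ for some $g\in G$ and $v\in\Lambda^0$. Then for every $\mu\in\Lambda^{p'}$ there exist unique $h\in G$ and $\nu\in\Lambda^{q'}$ such that $(\mu,h,\nu)$ is a cycline triple; and for every $\nu'\in\Lambda^{q'}$ there exist unique $h'\in G$ and $\mu'\in\Lambda^{p'}$ such that $(\mu',h',\nu')$ is a cycline triple.
   Context: Let $k\ge1$. A $k$-graph is a countable small category $\Lambda$ together with a functor $d:\Lambda\to\mathbb{N}^k$ (the degree map) with the unique factorization property: for every $\mu\in\Lambda$ and $m,n\in\mathbb{N}^k$ with $d(\mu)=m+n$ there are unique $\alpha,\beta\in\Lambda$ with $d(\alpha)=m$, $d(\beta)=n$ and $\mu=\alpha\beta$. Write $\Lambda^n=d^{-1}(n)$; $\Lambda^0$ is identified with the set of objects (vertices), and $r,s$ denote range and source. For $v,w\in\Lambda^0$ write $v\Lambda=r^{-1}(v)$, $v\Lambda w=r^{-1}(v)\cap s^{-1}(w)$. All $k$-graphs are assumed row-finite ($|v\Lambda^n|<\infty$) and source-free ($v\Lambda^n\neq\emptyset$). $\Lambda$ is strongly connected if $v\Lambda w\neq\emptyset$ for all $v,w\in\Lambda^0$. Infinite paths: let $\Omega_k=\{(p,q)\in\mathbb{N}^k\times\mathbb{N}^k:p\le q\}$ with $r(p,q)=(p,p)$, $s(p,q)=(q,q)$,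 $(p,q)(q,m)=(p,m)$, $d(p,q)=q-p$. An infinite path is a degree-preserving functor $x:\Omega_k\to\Lambda$; $\Lambda^\infty$ is the set of infinite paths, $v\Lambda^\infty=\{x:x(0,0)=v\}$, the shift is $\sigma^n(x)(p,q)=x(p+n,q+n)$, and for $\mu\in\Lambda$, $x\in s(\mu)\Lambda^\infty$, $\mu x$ is the unique infinite path $y$ with $y(0,d(\mu))=\mu$ and $\sigma^{d(\mu)}(y)=x$. Self-similar actions: $G$ is a countable discrete group. A self-similar action $(G,\Lambda)$ consists of an action of $G$ on $\Lambda$ by automorphisms (bijections preserving $d$, $r$, $s$), written $g\cdot\mu$, and a restriction map $G\times\Lambda\to G$, $(g,\mu)\mapsto g|_\mu$, such that for all $g,h\in G$, $v\in\Lambda^0$ and $\mu,\nu$ with $s(\mu)=r(\nu)$: $g\cdot(\mu\nu)=(g\cdot\mu)(g|_\mu\cdot\nu)$; $g|_v=g$; $g|_{\mu\nu}=(g|_\mu)|_\nu$; $1_G|_\mu=1_G$; $(gh)|_\mu=g|_{h\cdot\mu}\,h|_\mu$. For $x\in\Lambda^\infty$, $(g\cdot x)(p,q)=g|_{x(0,p)}\cdot x(p,q)$. The action is locally faithful if, whenever $g\in G$, $v\in\Lambda^0$ and $g\cdot\mu=\mu$ for all $\mu\in v\Lambda$, then $g=1_G$. Cycline triples and local periodicity: a triple $(\mu,g,\nu)\in\Lambda\times G\times\Lambda$ with $s(\mu)=g\cdot s(\nu)$ is cycline if $\mu(g\cdot x)=\nu x$ for all $x\in s(\nu)\Lambda^\infty$.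 For $v\in\Lambda^0$, $\Sigma^v_{G,\Lambda}=\{(p,q,g)\in\mathbb{N}^k\times\mathbb{N}^k\times G:\sigma^p(x)=\sigma^q(g\cdot x)\text{ for all }x\in v\Lambda^\infty\}$. *)

(* Defs.v *)
From HB Require Import structures.
From mathcomp Require Import all_boot.
From Stdlib Require Import List.

Set Implicit Arguments.
Unset Strict Implicit.
Unset Printing Implicit Defensive.

Definition Nk (k : nat) := {ffun 'I_k -> nat}.
Definition nk0 (k : nat) : Nk k := [ffun _ => 0%N].
Definition nkadd (k : nat) (m n : Nk k) : Nk k := [ffun i => (m i + n i)%N].
Definition nksub (k : nat) (m n : Nk k) : Nk k := [ffun i => (m i - n i)%N].
Definition nkle (k : nat) (m n : Nk k) : Prop := forall i, (m i <= n i)%N.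

(* ---------- k-graphs ----------
   The category is given by its morphisms ("paths"); objects are identified
   with the identity morphisms, which are exactly the ranges/sources of paths.
   Composition is a total function, only constrained on composable pairs
   (ks mu = kr nu); kcomp mu nu stands for the paper's mu nu. *)
Record kgraph (k : nat) := KGraph {
  kpath : Type;
  kd : kpath -> Nk k;
  kr : kpath -> kpath;
  ks : kpath -> kpath;
  kcomp : kpath -> kpath -> kpath;
  kr_r : forall mu, kr (kr mu) = kr mu;
  ks_r : forall mu, ks (kr mu) = kr mu;
  kr_s : forall mu, kr (ks mu) = ks mu;
  ks_s : forall mu, ks (ks mu) = ks mu;
  kcomp_idl : forall mu, kcomp (kr mu) mu = mu;
  kcomp_idr : forall mu, kcomp mu (ks mu) = mu;
  kcomp_r : forall mu nu, ks mu = kr nu -> kr (kcomp mu nu) = kr mu;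
  kcomp_s : forall mu nu, ks mu = kr nu -> ks (kcomp mu nu) = ks nu;
  kcomp_assoc : forall mu nu la, ks mu = kr nu -> ks nu = kr la ->
      kcomp (kcomp mu nu) la = kcomp mu (kcomp nu la);
  kd_id : forall mu, kd (kr mu) = nk0 k;
  kd_comp : forall mu nu, ks mu = kr nu -> kd (kcomp mu nu) = nkadd (kd mu) (kd nu);
  k_ufp : forall mu (m n : Nk k), kd mu = nkadd m n ->
      exists! ab : kpath * kpath,
        [/\ kd ab.1 = m, kd ab.2 = n, ks ab.1 = kr ab.2 & mu = kcomp ab.1 ab.2];
  k_countable : exists f : kpath -> nat, injective f
}.

Arguments kd {k L} _ : rename.
Arguments kr {k L} _ : rename.
Arguments ks {k L} _ : rename.
Arguments kcomp {k L} _ _ : rename.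

Definition is_vertex k (L : kgraph k) (v : kpath L) : Prop := kd v = nk0 k.

Definition row_finite k (L : kgraph k) : Prop :=
  forall (v : kpath L) (n : Nk k), is_vertex v ->
    exists s : list (kpath L), forall mu, kr mu = v -> kd mu = n -> In mu s.

Definition source_free k (L : kgraph k) : Prop :=
  forall (v : kpath L) (n : Nk k), is_vertex v ->
    exists mu : kpath L, kr mu = v /\ kd mu = n.

Definition strongly_connected k (L : kgraph k) : Prop :=
  forall v w : kpath L, is_vertex v -> is_vertex w ->
    exists mu : kpath L, kr mu = v /\ ks mu = w.

Record group := Group {
  gcar : Type;
  gmul : gcar -> gcar -> gcar;
  gone : gcar;
  ginv : gcar -> gcar;
  gmulA : forall x y z, gmul x (gmul y z) = gmul (gmul x y) z;
  gmul1 : forall x, gmul gone x = x;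
  gmulr1 : forall x, gmul x gone = x;
  gmulV : forall x, gmul (ginv x) x = gone;
  gmulVr : forall x, gmul x (ginv x) = gone;
  g_countable : exists f : gcar -> nat, injective f
}.
Arguments gmul {G} _ _ : rename.
Arguments gone {G} : rename.
Arguments ginv {G} _ : rename.

Record ssa k (L : kgraph k) (G : group) := SSA {
  act : gcar G -> kpath L -> kpath L;
  res : gcar G -> kpath L -> gcar G;
  act_bij : forall g, bijective (act g);
  act_d : forall g mu, kd (act g mu) = kd mu;
  act_r : forall g mu, kr (act g mu) = act g (kr mu);
  act_s : forall g mu, ks (act g mu) = act g (ks mu);
  act1 : forall mu, act gone mu = mu;
  actM : forall g h mu, act (gmul g h) mu = act g (act h mu);
  act_comp : forall g mu nu, ks mu = kr nu ->
      act g (kcomp mu nu) = kcomp (act g mu) (act (res g mu) nu);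
  res_vertex : forall g v, is_vertex v -> res g v = g;
  res_comp : forall g mu nu, ks mu = kr nu -> res g (kcomp mu nu) = res (res g mu) nu;
  res1 : forall mu, res gone mu = gone;
  resM : forall g h mu, res (gmul g h) mu = gmul (res g (act h mu)) (res h mu)
}.
Arguments act {k L G} _ _ _ : rename.
Arguments res {k L G} _ _ _ : rename.

Definition locally_faithful k (L : kgraph k) (G : group) (A : ssa L G) : Prop :=
  forall (g : gcar G) (v : kpath L), is_vertex v ->
    (forall mu, kr mu = v -> act A g mu = mu) -> g = gone.

(* ---------- infinite paths ----------
   A function x : N^k -> N^k -> kpath; only its values at (p,q) with p <= q
   (i.e. on Omega_k) are meaningful. *)
Definition ipath k (L : kgraph k) := Nk k -> Nk k -> kpath L.

Definition is_infpath k (L : kgraph k) (x : ipath L) : Prop :=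
  [/\ forall p q, nkle p q -> kd (x p q) = nksub q p,
      forall p q, nkle p q -> kr (x p q) = x p p /\ ks (x p q) = x q q
    & forall p q m, nkle p q -> nkle q m -> x p m = kcomp (x p q) (x q m)].

Definition ipeq k (L : kgraph k) (x y : ipath L) : Prop :=
  forall p q, nkle p q -> x p q = y p q.

Definition shift k (L : kgraph k) (n : Nk k) (x : ipath L) : ipath L :=
  fun p q => x (nkadd p n) (nkadd q n).

Definition iact k (L : kgraph k) (G : group) (A : ssa L G) (g : gcar G)
  (x : ipath L) : ipath L :=
  fun p q => act A (res A g (x (nk0 k) p)) (x p q).

(* y is the infinite kpath  mu x  *)
Definition is_concat k (L : kgraph k) (mu : kpath L) (x y : ipath L) : Prop :=
  [/\ is_infpath y, y (nk0 k) (kd mu) = mu & ipeq (shift (kd mu) y) x].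

Definition cycline k (L : kgraph k) (G : group) (A : ssa L G)
  (mu : kpath L) (g : gcar G) (nu : kpath L) : Prop :=
  ks mu = act A g (ks nu) /\
  forall x : ipath L, is_infpath x -> x (nk0 k) (nk0 k) = ks nu ->
    exists y : ipath L, is_concat mu (iact A g x) y /\ is_concat nu x y.

Definition Sigma k (L : kgraph k) (G : group) (A : ssa L G) (v : kpath L)
  (p q : Nk k) (g : gcar G) : Prop :=
  forall x : ipath L, is_infpath x -> x (nk0 k) (nk0 k) = v ->
    ipeq (shift p x) (shift q (iact A g x)).

(* Main.v *)
Require Import Defs.
From HB Require Import structures.
From mathcomp Require Import all_boot.
From mathcomp Require Import zify.
From Stdlib Require Import ClassicalEpsilon.

Set Implicit Arguments.
Unset Strict Implicit.
Unset Printing Implicit Defensive.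


Lemma nk_ext k (m n : Nk k) : (forall i, m i = n i) -> m = n.
Proof. by move=> H; apply/ffunP. Qed.

Lemma nkaddE k (m n : Nk k) i : nkadd m n i = (m i + n i)%N.
Proof. by rewrite ffunE. Qed.
Lemma nksubE k (m n : Nk k) i : nksub m n i = (m i - n i)%N.
Proof. by rewrite ffunE. Qed.
Lemma nk0E k i : nk0 k i = 0%N.
Proof. by rewrite ffunE. Qed.

Ltac nkprep i :=
  repeat match goal with
  | H : nkle _ _ |- _ => move: (H i); clear H
  | H : @eq (Nk _) _ _ |- _ => move: (congr1 (fun f : Nk _ => f i) H); clear H
  end; repeat first [rewrite nkaddE | rewrite nksubE | rewrite nk0E].

Ltac nkeq := let i := fresh "i" in apply nk_ext => i; nkprep i; lia.
Ltac nkle_tac := let i := fresh "i" in move=> i; nkprep i; lia.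




Definition fspec k (L : kgraph k) (pi : kpath L) (m : Nk k) (ab : kpath L * kpath L) :=
  [/\ kd ab.1 = m, kd ab.2 = nksub (kd pi) m, ks ab.1 = kr ab.2 & pi = kcomp ab.1 ab.2].
Definition fac k (L : kgraph k) (pi : kpath L) (m : Nk k) :=
  epsilon (inhabits (pi, pi)) (fspec pi m).
Definition pre k (L : kgraph k) (pi : kpath L) m := (fac pi m).1.
Definition post k (L : kgraph k) (pi : kpath L) m := (fac pi m).2.

Lemma ufp_uniq k (L : kgraph k) (pi : kpath L) m n (ab ab' : kpath L * kpath L) :
  kd pi = nkadd m n ->
  [/\ kd ab.1 = m, kd ab.2 = n, ks ab.1 = kr ab.2 & pi = kcomp ab.1 ab.2] ->
  [/\ kd ab'.1 = m, kd ab'.2 = n, ks ab'.1 = kr ab'.2 & pi = kcomp ab'.1 ab'.2] ->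
  ab = ab'.
Proof.
move=> H H1 H2; have [x [_ Hx]] := k_ufp H.
by rewrite -(Hx _ H1) -(Hx _ H2).
Qed.

Lemma fac_spec k (L : kgraph k) (pi : kpath L) m :
  nkle m (kd pi) -> fspec pi m (fac pi m).
Proof.
move=> Hm; apply: epsilon_spec.
have Hd : kd pi = nkadd m (nksub (kd pi) m) by nkeq.
have [x [[H1 H2 H3 H4] _]] := k_ufp Hd.
by exists x; split.
Qed.

Lemma prepost k (L : kgraph k) (pi : kpath L) m : nkle m (kd pi) ->
  [/\ kd (pre pi m) = m, kd (post pi m) = nksub (kd pi) m,
      ks (pre pi m) = kr (post pi m) & pi = kcomp (pre pi m) (post pi m)].
Proof. by move=> /fac_spec []. Qed.

Lemma UF k (L : kgraph k) (a b : kpath L) m :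
  ks a = kr b -> kd a = m -> pre (kcomp a b) m = a /\ post (kcomp a b) m = b.
Proof.
move=> Hab Ha.
have Hd : kd (kcomp a b) = nkadd m (kd b) by rewrite kd_comp // Ha.
have Hle : nkle m (kd (kcomp a b)) by rewrite Hd; nkle_tac.
have [H1 H2 H3 H4] := prepost Hle.
have E : (pre (kcomp a b) m, post (kcomp a b) m) = (a, b).
  apply: (ufp_uniq Hd); split => //=. rewrite H2 Hd; nkeq.
by case: E.
Qed.

Lemma preUF k (L : kgraph k) (a b : kpath L) :
  ks a = kr b -> pre (kcomp a b) (kd a) = a.
Proof. by move=> H; case: (UF H erefl). Qed.
Lemma postUF k (L : kgraph k) (a b : kpath L) m :
  ks a = kr b -> kd a = m -> post (kcomp a b) m = b.
Proof. by move=> H1 H2; case: (UF H1 H2). Qed.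

Lemma pre_full k (L : kgraph k) (pi : kpath L) : pre pi (kd pi) = pi.
Proof.
have H : ks pi = kr (ks pi) by rewrite kr_s.
by have := preUF H; rewrite kcomp_idr.
Qed.

Lemma post_full k (L : kgraph k) (pi : kpath L) m : kd pi = m -> post pi m = ks pi.
Proof.
have H : ks pi = kr (ks pi) by rewrite kr_s.
by move=> Hm; have := postUF H Hm; rewrite kcomp_idr.
Qed.

Lemma pre0 k (L : kgraph k) (pi : kpath L) : pre pi (nk0 k) = kr pi.
Proof.
have H : ks (kr pi) = kr pi by rewrite ks_r.
by have := preUF H; rewrite kcomp_idl kd_id.
Qed.

Lemma post0 k (L : kgraph k) (pi : kpath L) : post pi (nk0 k) = pi.
Proof.
have H : ks (kr pi) = kr pi by rewrite ks_r.
by have := postUF H (kd_id pi); rewrite kcomp_idl.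
Qed.

Lemma pre_comp k (L : kgraph k) (a b : kpath L) n :
  ks a = kr b -> nkle n (kd a) -> pre (kcomp a b) n = pre a n.
Proof.
move=> Hab Hn; have [H1 H2 H3 H4] := prepost Hn.
have Hs : ks (post a n) = kr b by rewrite -Hab {2}H4 kcomp_s.
rewrite {1}H4 kcomp_assoc //.
by case: (UF (a := pre a n) (b := kcomp (post a n) b) (m := n)) => //; rewrite kcomp_r.
Qed.

Lemma post_comp k (L : kgraph k) (a b : kpath L) n :
  ks a = kr b -> nkle n (kd b) -> post (kcomp a b) (nkadd (kd a) n) = post b n.
Proof.
move=> Hab Hn; have [H1 H2 H3 H4] := prepost Hn.
have Hr : ks a = kr (pre b n) by rewrite Hab {1}H4 kcomp_r.
rewrite {1}H4 -kcomp_assoc //.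
apply: postUF; first by rewrite kcomp_s.
by rewrite kd_comp // H1.
Qed.

Lemma pre_pre k (L : kgraph k) (pi : kpath L) n m :
  nkle n m -> nkle m (kd pi) -> pre (pre pi m) n = pre pi n.
Proof.
move=> Hnm Hm; have [H1 H2 H3 H4] := prepost Hm.
rewrite {2}H4 pre_comp // H1 //.
Qed.

Lemma ks_post k (L : kgraph k) (pi : kpath L) m : nkle m (kd pi) -> ks (post pi m) = ks pi.
Proof. by move=> Hm; have [H1 H2 H3 H4] := prepost Hm; rewrite {2}H4 kcomp_s. Qed.

Lemma kr_pre k (L : kgraph k) (pi : kpath L) m : nkle m (kd pi) -> kr (pre pi m) = kr pi.
Proof. by move=> Hm; have [H1 H2 H3 H4] := prepost Hm; rewrite {2}H4 kcomp_r. Qed.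

Lemma vertex_kr k (L : kgraph k) (u : kpath L) : is_vertex u -> kr u = u.
Proof. move=> Hu; by rewrite -{2}(pre_full u) Hu pre0. Qed.

Lemma is_vertex_kr k (L : kgraph k) (u : kpath L) : is_vertex (kr u).
Proof. exact: kd_id. Qed.
Lemma is_vertex_ks k (L : kgraph k) (u : kpath L) : is_vertex (ks u).
Proof. by rewrite /is_vertex -kr_s kd_id. Qed.



Definition ofpre k (L : kgraph k) (P : Nk k -> kpath L) : ipath L :=
  fun p q => post (P q) p.

Lemma ofpre_inf k (L : kgraph k) (P : Nk k -> kpath L) :
  (forall q, kd (P q) = q) -> (forall q m, nkle q m -> pre (P m) q = P q) ->
  is_infpath (ofpre P).
Proof.
move=> Hd Hc; rewrite /ofpre; split.
- move=> p q Hpq; have Hpq' : nkle p (kd (P q)) by rewrite Hd.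
  by have [_ -> _ _] := prepost Hpq'; rewrite Hd.
- move=> p q Hpq; have Hpq' : nkle p (kd (P q)) by rewrite Hd.
  have [H1 H2 H3 H4] := prepost Hpq'; split.
    by rewrite -H3 Hc // post_full.
  by rewrite ks_post // post_full.
- move=> p q m Hpq Hqm.
  have Hqm' : nkle q (kd (P m)) by rewrite Hd.
  have Hpq' : nkle p (kd (P q)) by rewrite Hd.
  have [G1 G2 G3 G4] := prepost Hqm'.
  have [F1 F2 F3 F4] := prepost Hpq'.
  rewrite Hc // in G3 G4.
  have Hs : ks (post (P q) p) = kr (post (P m) q) by rewrite -G3 {2}F4 kcomp_s.
  rewrite {1}G4 {1}F4 kcomp_assoc //.
  apply: postUF => //; by rewrite kcomp_r.
Qed.

Lemma ofpre0 k (L : kgraph k) (P : Nk k -> kpath L) q : ofpre P (nk0 k) q = P q.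
Proof. by rewrite /ofpre post0. Qed.

Lemma shift_inf k (L : kgraph k) (x : ipath L) n : is_infpath x -> is_infpath (shift n x).
Proof.
case=> H1 H2 H3; rewrite /shift; split.
- move=> p q Hpq; rewrite H1; [nkeq | nkle_tac].
- move=> p q Hpq; apply: H2; nkle_tac.
- move=> p q m Hpq Hqm; apply: H3; nkle_tac.
Qed.

Lemma inf_seg k (L : kgraph k) (y : ipath L) a m : is_infpath y -> nkle a m ->
  y (nk0 k) a = pre (y (nk0 k) m) a /\ y a m = post (y (nk0 k) m) a.
Proof.
case=> H1 H2 H3 Ham.
have H0a : nkle (nk0 k) a by nkle_tac.
have E1 : ks (y (nk0 k) a) = kr (y a m).
  by rewrite (proj2 (H2 _ _ H0a)) (proj1 (H2 _ _ Ham)).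
have E2 : kd (y (nk0 k) a) = a by rewrite H1 //; nkeq.
have [U1 U2] := UF E1 E2.
by rewrite (H3 (nk0 k) a m) // U1 U2.
Qed.

Lemma inf_x00 k (L : kgraph k) (y : ipath L) : is_infpath y -> is_vertex (y (nk0 k) (nk0 k)).
Proof. case=> H1 _ _; rewrite /is_vertex H1; [nkeq|nkle_tac]. Qed.

Lemma inf_eq k (L : kgraph k) (y y' : ipath L) n : is_infpath y -> is_infpath y' ->
  y (nk0 k) n = y' (nk0 k) n -> ipeq (shift n y) (shift n y') -> ipeq y y'.
Proof.
move=> Hy Hy' E Es a b Hab.
have Hbm : nkle b (nkadd b n) by nkle_tac.
have K : y (nk0 k) (nkadd b n) = y' (nk0 k) (nkadd b n).
  case: Hy => _ _ Hy3; case: Hy' => _ _ Hy'3.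
  have H0 : nkle (nk0 k) n by nkle_tac.
  have Hn : nkle n (nkadd b n) by nkle_tac.
  rewrite (Hy3 _ n) // (Hy'3 _ n) // E.
  have := Es (nk0 k) b; rewrite /shift.
  have -> : nkadd (nk0 k) n = n by nkeq.
  move=> -> //; nkle_tac.
have [Pb _] := inf_seg Hy Hbm; have [Pb' _] := inf_seg Hy' Hbm.
have [_ Pa] := inf_seg Hy Hab; have [_ Pa'] := inf_seg Hy' Hab.
by rewrite Pa Pa' Pb Pb' K.
Qed.

Lemma inf_comp k (L : kgraph k) (x : ipath L) a b : is_infpath x -> nkle a b ->
  x (nk0 k) b = kcomp (x (nk0 k) a) (x a b) /\ ks (x (nk0 k) a) = kr (x a b).
Proof.
case=> H1 H2 H3 Hab; have H0a : nkle (nk0 k) a by nkle_tac.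
split; first by apply: H3.
by rewrite (proj2 (H2 _ _ H0a)) (proj1 (H2 _ _ Hab)).
Qed.

Lemma inf_r k (L : kgraph k) (x : ipath L) a : is_infpath x ->
  kr (x (nk0 k) a) = x (nk0 k) (nk0 k).
Proof. case=> _ H2 _; apply: (proj1 (H2 _ _ _)); nkle_tac. Qed.

Lemma inf_kd k (L : kgraph k) (x : ipath L) a : is_infpath x -> kd (x (nk0 k) a) = a.
Proof. case=> H1 _ _; rewrite H1; [nkeq|nkle_tac]. Qed.

Lemma concat_ex k (L : kgraph k) (lam : kpath L) (x : ipath L) :
  is_infpath x -> x (nk0 k) (nk0 k) = ks lam ->
  exists Y, [/\ is_infpath Y, Y (nk0 k) (kd lam) = lam, Y (nk0 k) (nk0 k) = kr lam,
    forall a, Y (nk0 k) (nkadd a (kd lam)) = kcomp lam (x (nk0 k) a) &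
    forall a b, nkle a b -> Y (nkadd a (kd lam)) (nkadd b (kd lam)) = x a b].
Proof.
move=> Hx Hx0.
have Hc : forall q, ks lam = kr (x (nk0 k) q) by move=> q; rewrite inf_r.
have Hkd : forall q, kd (kcomp lam (x (nk0 k) q)) = nkadd (kd lam) q.
  by move=> q; rewrite kd_comp // inf_kd.
pose P q := pre (kcomp lam (x (nk0 k) q)) q.
have HdP : forall q, kd (P q) = q.
  move=> q; have Hq : nkle q (kd (kcomp lam (x (nk0 k) q))) by rewrite Hkd; nkle_tac.
  by have [-> _ _ _] := prepost Hq.
have Hext : forall a b, nkle a b ->
    kcomp lam (x (nk0 k) b) = kcomp (kcomp lam (x (nk0 k) a)) (x a b) /\
    ks (kcomp lam (x (nk0 k) a)) = kr (x a b).
  move=> a b Hab; have [E1 E2] := inf_comp Hx Hab.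
  by rewrite kcomp_s // E1 kcomp_assoc.
have HcP : forall q m, nkle q m -> pre (P m) q = P q.
  move=> q m Hqm; rewrite /P pre_pre //; last by rewrite Hkd; nkle_tac.
  have [E1 E2] := Hext _ _ Hqm.
  by rewrite E1 pre_comp // Hkd; nkle_tac.
have Hfull : forall a, P (nkadd a (kd lam)) = kcomp lam (x (nk0 k) a).
  move=> a; rewrite /P.
  have Ha : nkle a (nkadd a (kd lam)) by nkle_tac.
  have [E1 E2] := Hext _ _ Ha.
  rewrite E1 pre_comp //; last by rewrite Hkd; nkle_tac.
  have -> : nkadd a (kd lam) = kd (kcomp lam (x (nk0 k) a)) by rewrite Hkd; nkeq.
  by rewrite pre_full.
exists (ofpre P); split.
- exact: ofpre_inf.
- have E := Hfull (nk0 k).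
  have E0 : nkadd (nk0 k) (kd lam) = kd lam by nkeq.
  by rewrite E0 Hx0 kcomp_idr in E; rewrite ofpre0.
- by rewrite ofpre0 /P pre0 kcomp_r.
- by move=> a; rewrite ofpre0.
- move=> a b Hab; rewrite /ofpre Hfull.
  have -> : nkadd a (kd lam) = nkadd (kd lam) a by nkeq.
  rewrite post_comp //; last by rewrite inf_kd.
  by have [_ <-] := inf_seg Hx Hab.
Qed.

Definition one k : Nk k := [ffun _ => 1%N].
Definition nscale k (n : nat) : Nk k := [ffun _ => n].

Lemma inf_exists k (L : kgraph k) (u : kpath L) : source_free L -> is_vertex u ->
  exists x : ipath L, is_infpath x /\ x (nk0 k) (nk0 k) = u.
Proof.
move=> Hsf Hu.
pose step (w : kpath L) := epsilon (inhabits u) (fun mu => kr mu = w /\ kd mu = one k).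
have Hstep : forall mu : kpath L, kr (step (ks mu)) = ks mu /\ kd (step (ks mu)) = one k.
  move=> mu; apply: (@epsilon_spec _ _ (fun mu0 => kr mu0 = ks mu /\ kd mu0 = one k)).
  apply: Hsf; exact: is_vertex_ks.
pose fix S n := match n with 0 => u | n'.+1 => kcomp (S n') (step (ks (S n'))) end.
have HS : forall n, kd (S n) = nscale k n /\ kr (S n) = u.
  elim=> [|n [IH1 IH2]] /=.
    split; [rewrite Hu; nkeq | exact: vertex_kr].
  have [E1 E2] := Hstep (S n).
  rewrite kd_comp ?kcomp_r ?E1 //; split => //.
  rewrite IH1 E2; apply: nk_ext => i; rewrite !ffunE; lia.
have Hext : forall n m, (n <= m)%N -> exists T, ks (S n) = kr T /\ S m = kcomp (S n) T.
  move=> n; elim=> [|m IH] Hnm.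
    have -> : n = 0%N by lia.
    by exists (ks (S 0)); rewrite kr_s kcomp_idr.
  case: (ltngtP n m.+1) Hnm => // [Hlt|->] _; last first.
    by exists (ks (S m.+1)); rewrite kr_s kcomp_idr.
  have [T [E1 E2]] := IH (ltnSE Hlt).
  have [F1 F2] := Hstep (S m).
  have HT : ks T = kr (step (ks (S m))) by rewrite F1 E2 kcomp_s.
  exists (kcomp T (step (ks (S m)))); split.
    by rewrite kcomp_r.
  by rewrite /= -kcomp_assoc // -E2.
pose N (q : Nk k) := (\max_(i < k) q i)%N.
have HN : forall q, nkle q (kd (S (N q))).
  move=> q i; rewrite (proj1 (HS _)) ffunE; exact: leq_bigmax.
pose P q := pre (S (N q)) q.
exists (ofpre P); split; last first.
  by rewrite ofpre0 /P pre0 (proj2 (HS _)).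
apply: ofpre_inf.
  by move=> q; have [-> _ _ _] := prepost (HN q).
move=> q m Hqm; rewrite /P pre_pre //.
case: (leqP (N q) (N m)) => HNq.
  have [T [E1 E2]] := Hext _ _ HNq.
  by rewrite E2 pre_comp.
have [T [E1 E2]] := Hext _ _ (ltnW HNq).
rewrite E2 pre_comp //.
move=> i; apply: leq_trans (Hqm i) (HN m i).
Qed.



Lemma ML k (L : kgraph k) (G : group) (A : ssa L G) p q g v P' Q' (lam : kpath L) :
  source_free L -> Sigma A v p q g -> nkadd p Q' = nkadd P' q -> kr lam = v ->
  nkle (nkadd P' q) (kd lam) ->
  cycline A (act A (res A g (pre lam (nksub (kd lam) P'))) (post lam (nksub (kd lam) P')))
            (res A g lam) (post lam (nksub (kd lam) Q')).
Proof.
move=> Hsf HS HPQ Hr Hlen.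
have HP : nkle (nksub (kd lam) P') (kd lam) by nkle_tac.
have HQ : nkle (nksub (kd lam) Q') (kd lam) by nkle_tac.
have [P1 P2 P3 P4] := prepost HP.
have [Q1 Q2 Q3 Q4] := prepost HQ.
set rho := act A _ (post lam (nksub (kd lam) P')).
set nu := post lam (nksub (kd lam) Q').
have Hkdrho : kd rho = P' by rewrite act_d P2; nkeq.
have Hkdnu : kd nu = Q' by rewrite Q2; nkeq.
have Hksnu : ks nu = ks lam by rewrite ks_post.
have key : forall x : ipath L, is_infpath x -> x (nk0 k) (nk0 k) = ks lam ->
    exists y, is_concat rho (iact A (res A g lam) x) y /\ is_concat nu x y.
  move=> x Hx Hx0.
  have [Y [Yinf Y1 Y0 Y2 Y3]] := concat_ex Hx Hx0.
  have YS : forall a b, nkle a b -> Y (nkadd a p) (nkadd b p) = iact A g Y (nkadd a q) (nkadd b q).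
    move=> a b Hab; apply: (HS Y Yinf _ a b Hab); by rewrite Y0.
  have Yseg : forall a, nkle a (kd lam) -> Y (nk0 k) a = pre lam a /\ Y a (kd lam) = post lam a.
    by move=> a Ha; have [-> ->] := inf_seg Yinf Ha; rewrite Y1.
  exists (shift (nksub (kd lam) Q') Y); split; split; rewrite ?Hkdrho ?Hkdnu.
  - exact: shift_inf.
  - rewrite /shift.
    pose c := nksub (kd lam) (nkadd Q' p).
    have -> : nkadd (nk0 k) (nksub (kd lam) Q') = nkadd c p by rewrite /c; nkeq.
    have -> : nkadd P' (nksub (kd lam) Q') = nkadd (nkadd c P') p by rewrite /c; nkeq.
    rewrite YS; last by nkle_tac.
    have -> : nkadd c q = nksub (kd lam) P' by rewrite /c; nkeq.
    have -> : nkadd (nkadd c P') q = (kd lam) by rewrite /c; nkeq.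
    by rewrite /iact; have [-> ->] := Yseg _ HP.
  - move=> a b Hab; rewrite /shift.
    pose c := nksub (kd lam) (nkadd Q' p).
    have -> : nkadd (nkadd a P') (nksub (kd lam) Q') = nkadd (nkadd (nkadd a P') c) p by rewrite /c; nkeq.
    have -> : nkadd (nkadd b P') (nksub (kd lam) Q') = nkadd (nkadd (nkadd b P') c) p by rewrite /c; nkeq.
    rewrite YS; last by nkle_tac.
    have -> : nkadd (nkadd (nkadd a P') c) q = nkadd a (kd lam) by rewrite /c; nkeq.
    have -> : nkadd (nkadd (nkadd b P') c) q = nkadd b (kd lam) by rewrite /c; nkeq.
    rewrite /iact Y2 Y3 // res_comp //.
    by rewrite inf_r.
  - exact: shift_inf.
  - rewrite /shift.
    have -> : nkadd (nk0 k) (nksub (kd lam) Q') = nksub (kd lam) Q' by nkeq.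
    have -> : nkadd Q' (nksub (kd lam) Q') = (kd lam) by nkeq.
    by have [_ ->] := Yseg _ HQ.
  - move=> a b Hab; rewrite /shift.
    have -> : nkadd (nkadd a Q') (nksub (kd lam) Q') = nkadd a (kd lam) by nkeq.
    have -> : nkadd (nkadd b Q') (nksub (kd lam) Q') = nkadd b (kd lam) by nkeq.
    exact: Y3.
split; last by move=> x Hx; rewrite Hksnu; exact: key.
have [x [Hx Hx0]] := inf_exists Hsf (is_vertex_ks lam).
have [y [[Hy Hy1 Hy2] _]] := key x Hx Hx0.
have H0 : nkle (nk0 k) (nk0 k) by nkle_tac.
have := Hy2 _ _ H0; rewrite /shift /iact Hx0 res_vertex ?Hx0 //; last exact: is_vertex_ks.
move=> E; rewrite Hksnu -E -Hy1.
case: Hy => _ Hy2' _.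
have Hle : nkle (nk0 k) (kd rho) by nkle_tac.
rewrite (proj2 (Hy2' _ _ Hle)).
rewrite Hy1.
by have -> : nkadd (nk0 k) (kd rho) = kd rho by nkeq.
Qed.



Lemma actK k (L : kgraph k) (G : group) (A : ssa L G) h mu :
  act A (ginv h) (act A h mu) = mu.
Proof. by rewrite -actM gmulV act1. Qed.
Lemma actK' k (L : kgraph k) (G : group) (A : ssa L G) h mu :
  act A h (act A (ginv h) mu) = mu.
Proof. by rewrite -actM gmulVr act1. Qed.

Lemma LF_eq k (L : kgraph k) (G : group) (A : ssa L G) (w : kpath L) h1 h2 :
  locally_faithful A -> is_vertex w ->
  (forall tau, kr tau = w -> act A h1 tau = act A h2 tau) -> h1 = h2.
Proof.
move=> Hlf Hw H.
have E : gmul (ginv h2) h1 = gone.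
  apply: (Hlf _ w Hw) => tau Ht; by rewrite actM H // actK.
by rewrite -[h1]gmul1 -(gmulVr h2) -gmulA E gmulr1.
Qed.

Lemma cyc_y k (L : kgraph k) (G : group) (A : ssa L G) mu h nu (x : ipath L) :
  cycline A mu h nu -> is_infpath x -> x (nk0 k) (nk0 k) = ks nu ->
  exists y, [/\ is_infpath y, y (nk0 k) (kd mu) = mu, y (nk0 k) (kd nu) = nu,
    (forall a b, nkle a b -> y (nkadd a (kd mu)) (nkadd b (kd mu)) = iact A h x a b) &
    (forall a b, nkle a b -> y (nkadd a (kd nu)) (nkadd b (kd nu)) = x a b)].
Proof.
move=> [_ Hc] Hx Hx0; have [y [[Hy Hy1 Hy2] [_ Hy3 Hy4]]] := Hc x Hx Hx0.
by exists y; split.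
Qed.

Lemma cyc_prefix k (L : kgraph k) (G : group) (A : ssa L G) mu h nu (x : ipath L) :
  cycline A mu h nu -> is_infpath x -> x (nk0 k) (nk0 k) = ks nu ->
  kcomp mu (act A h (x (nk0 k) (kd nu))) = kcomp nu (x (nk0 k) (kd mu)).
Proof.
move=> Hc Hx Hx0; have [y [Hy Y1 Y2 Y3 Y4]] := cyc_y Hc Hx Hx0.
have Hm : nkle (kd mu) (nkadd (kd nu) (kd mu)) by nkle_tac.
have Hn : nkle (kd nu) (nkadd (kd nu) (kd mu)) by nkle_tac.
have [E1 _] := inf_comp Hy Hm.
have [E2 _] := inf_comp Hy Hn.
have H0 : nkle (nk0 k) (kd nu) by nkle_tac.
have H0' : nkle (nk0 k) (kd mu) by nkle_tac.
have F1 := Y3 _ _ H0; have F2 := Y4 _ _ H0'.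
have e1 : nkadd (nk0 k) (kd mu) = kd mu by nkeq.
have e2 : nkadd (nk0 k) (kd nu) = kd nu by nkeq.
have e3 : nkadd (kd mu) (kd nu) = nkadd (kd nu) (kd mu) by nkeq.
rewrite e1 in F1; rewrite e2 e3 in F2.
rewrite /iact Hx0 res_vertex ?Hx0 in F1; last exact: is_vertex_ks.
have L1 : kcomp mu (act A h (x (nk0 k) (kd nu))) = y (nk0 k) (nkadd (kd nu) (kd mu)).
  by rewrite E1 Y1 F1.
have L2 : kcomp nu (x (nk0 k) (kd mu)) = y (nk0 k) (nkadd (kd nu) (kd mu)).
  by rewrite E2 Y2 F2.
by rewrite L1 L2.
Qed.

Lemma cyc_same_nu k (L : kgraph k) (G : group) (A : ssa L G) mu1 mu2 h1 h2 nu :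
  source_free L -> locally_faithful A ->
  cycline A mu1 h1 nu -> cycline A mu2 h2 nu -> kd mu1 = kd mu2 ->
  h1 = h2 /\ mu1 = mu2.
Proof.
move=> Hsf Hlf C1 C2 Hd.
have yeq : forall x, is_infpath x -> x (nk0 k) (nk0 k) = ks nu ->
    exists y1 y2, [/\ y1 (nk0 k) (kd mu1) = mu1, y2 (nk0 k) (kd mu2) = mu2,
      (forall a b, nkle a b -> y1 (nkadd a (kd mu1)) (nkadd b (kd mu1)) = iact A h1 x a b),
      (forall a b, nkle a b -> y2 (nkadd a (kd mu2)) (nkadd b (kd mu2)) = iact A h2 x a b) &
      ipeq y1 y2].
  move=> x Hx Hx0.
  have [y1 [Hy1 A1 A2 A3 A4]] := cyc_y C1 Hx Hx0.
  have [y2 [Hy2 B1 B2 B3 B4]] := cyc_y C2 Hx Hx0.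
  exists y1, y2; split => //.
  apply: (inf_eq Hy1 Hy2 (_ : y1 (nk0 k) (kd nu) = y2 (nk0 k) (kd nu))).
    by rewrite A2 B2.
  by move=> a b Hab; rewrite /shift A4 // B4.
split.
  apply: (LF_eq Hlf (is_vertex_ks nu)) => tau Ht.
  have [z [Hz Hz0]] := inf_exists Hsf (is_vertex_ks tau).
  have [x [Hx X1 X0 _ _]] := concat_ex Hz Hz0.
  have [y1 [y2 [_ _ F1 F2 E]]] := yeq x Hx (etrans X0 Ht).
  have H0 : nkle (nk0 k) (kd tau) by nkle_tac.
  have G1 := F1 _ _ H0; have G2 := F2 _ _ H0.
  have Rv : forall h, res A h (kr tau) = h.
    by move=> h; apply: res_vertex; exact: is_vertex_kr.
  rewrite /iact X0 X1 !Rv in G1 G2.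
  rewrite -G1 -G2 E; first by rewrite Hd.
  nkle_tac.
have [x [Hx Hx0]] := inf_exists Hsf (is_vertex_ks nu).
have [y1 [y2 [E1 E2 _ _ E]]] := yeq x Hx Hx0.
rewrite -E1 -E2 E -?Hd //; nkle_tac.
Qed.



Lemma cyc_same_mu k (L : kgraph k) (G : group) (A : ssa L G) mu h h' nu nu' :
  source_free L -> locally_faithful A ->
  cycline A mu h nu -> cycline A mu h' nu' -> kd nu = kd nu' ->
  h = h' /\ nu = nu'.
Proof.
move=> Hsf Hlf C1 C2 Hd.
suff E : nu = nu'.
  subst nu'; have [-> _] := cyc_same_nu Hsf Hlf C1 C2 erefl; by [].
have [x [Hx Hx0]] := inf_exists Hsf (is_vertex_ks nu).
pose om := act A (ginv h') (act A h (x (nk0 k) (kd nu))).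
have Hom : kr om = ks nu'.
  rewrite /om !act_r inf_r // Hx0.
  case: C1 => <- _; case: C2 => -> _; by rewrite actK.
have [z [Hz Hz0]] := inf_exists Hsf (is_vertex_ks om).
have [x' [Hx' X1 X0 _ _]] := concat_ex Hz Hz0.
have Hkdom : kd om = kd nu' by rewrite /om !act_d inf_kd.
have P1 := cyc_prefix C1 Hx Hx0.
have P2 := cyc_prefix C2 Hx' (etrans X0 Hom).
rewrite -Hkdom X1 /om actK' P1 in P2.
have c1 : ks nu = kr (x (nk0 k) (kd mu)) by rewrite inf_r.
have c2 : ks nu' = kr (x' (nk0 k) (kd mu)) by rewrite inf_r // X0.
by rewrite -(preUF c1) P2 Hd preUF.
Qed.

Lemma path_between k (L : kgraph k) (u t : kpath L) (D : Nk k) :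
  source_free L -> strongly_connected L -> is_vertex u -> is_vertex t ->
  exists mu : kpath L, [/\ kr mu = u, ks mu = t & nkle D (kd mu)].
Proof.
move=> Hsf Hsc Hu Ht.
have [a [Ha1 Ha2]] := Hsf u D Hu.
have [pi [Hp1 Hp2]] := Hsc (ks a) t (is_vertex_ks a) Ht.
have Hc : ks a = kr pi by [].
exists (kcomp a pi); split.
- by rewrite kcomp_r.
- by rewrite kcomp_s.
- rewrite kd_comp // Ha2; nkle_tac.
Qed.

Theorem proposition4p5 (k : nat) (L : kgraph k) (G : group) (A : ssa L G) :
  (0 < k)%N ->
  row_finite L -> source_free L -> strongly_connected L ->
  locally_faithful A ->
  forall p q p' q' : Nk k, nkadd p q' = nkadd p' q ->
  forall (g : gcar G) (v : kpath L), is_vertex v -> Sigma A v p q g ->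
  (forall mu : kpath L, kd mu = p' ->
     exists! hn : gcar G * kpath L, kd hn.2 = q' /\ cycline A mu hn.1 hn.2) /\
  (forall nu' : kpath L, kd nu' = q' ->
     exists! hm : gcar G * kpath L, kd hm.2 = p' /\ cycline A hm.2 hm.1 nu').
Proof.
move=> _ _ Hsf Hsc Hlf p q p' q' HPQ g v Hv HS; split.
- move=> mu Hmu.
  have [a0 [Ha1 Ha2]] := Hsf v q Hv.
  pose h0 := res A g a0.
  have Hu0 : is_vertex (act A h0 (ks a0)) by rewrite /is_vertex act_d; exact: is_vertex_ks.
  have [pi [Hp1 Hp2 Hp3]] := path_between p Hsf Hsc Hu0 (is_vertex_kr mu).
  pose be := act A (ginv h0) pi.
  have Hbe : ks a0 = kr be by rewrite /be act_r Hp1 actK.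
  pose al := kcomp a0 be.
  have Hkdal : kd al = nkadd q (kd be) by rewrite kd_comp // Ha2.
  have Hkdbe : kd be = kd pi by rewrite act_d.
  have C1 := ML (P' := kd be) (Q' := nksub (nkadd (kd be) q) p) (lam := al) Hsf HS.
  have e1 : nksub (kd al) (kd be) = kd a0 by rewrite Hkdal Ha2; nkeq.
  rewrite e1 preUF // postUF // in C1.
  have f1 : nkadd p (nksub (nkadd (kd be) q) p) = nkadd (kd be) q.
    nkeq.
  have f2 : kr al = v by rewrite kcomp_r.
  have f3 : nkle (nkadd (kd be) q) (kd al) by rewrite Hkdal; nkle_tac.
  have [T _] := C1 f1 f2 f3.
    rewrite act_s /be act_s actK' Hp2 ks_post in T; last by rewrite Hkdal; nkle_tac.
    pose K0 := res A g al.
    pose be' := act A (ginv K0) mu.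
    have Hbe' : ks al = kr be' by rewrite /be' act_r T actK.
    pose lam := kcomp al be'.
    have Hkdbe' : kd be' = p' by rewrite act_d.
    have Hkdlam : kd lam = nkadd (kd al) p' by rewrite kd_comp // Hkdbe'.
    have C2 := ML (P' := p') (Q' := q') (lam := lam) Hsf HS HPQ.
    have e2 : nksub (kd lam) p' = kd al by rewrite Hkdlam; nkeq.
    rewrite e2 preUF // postUF // /be' actK' in C2.
    have Hlen : nkle (nkadd p' q) (kd lam).
      nkle_tac.
    have C3 := C2 (_ : kr lam = v) Hlen.
    exists (res A g lam, post lam (nksub (kd lam) q')); split.
      split => //=; last first.
        apply: C3; by rewrite kcomp_r // kcomp_r // Ha1.
      have Hq : nkle (nksub (kd lam) q') (kd lam) by nkle_tac.
      have [_ -> _ _] := prepost Hq; nkeq.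
    move=> [h' nu'] /= [Hd Hc].
    have C4 : cycline A mu (res A g lam) (post lam (nksub (kd lam) q')).
      apply: C3; by rewrite kcomp_r // kcomp_r // Ha1.
    have Hd' : kd (post lam (nksub (kd lam) q')) = kd nu'.
      have Hq : nkle (nksub (kd lam) q') (kd lam) by nkle_tac.
      have [_ -> _ _] := prepost Hq; rewrite Hd; nkeq.
    by have [-> ->] := cyc_same_mu Hsf Hlf C4 Hc Hd'.
- move=> nu' Hnu'.
  have [ga [Hg1 Hg2 Hg3]] := path_between (nkadd p' q) Hsf Hsc Hv (is_vertex_kr nu').
  have Hc : ks ga = kr nu' by [].
  pose lam := kcomp ga nu'.
  have Hkdlam : kd lam = nkadd (kd ga) q' by rewrite kd_comp // Hnu'.
  have Hlen : nkle (nkadd p' q) (kd lam) by nkle_tac.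
  have fr : kr lam = v by rewrite kcomp_r.
  have C := ML (P' := p') (Q' := q') (lam := lam) Hsf HS HPQ fr Hlen.
  have e : nksub (kd lam) q' = kd ga by rewrite Hkdlam; nkeq.
  have E2 : post lam (kd ga) = nu' by apply: postUF.
  rewrite e E2 in C.
  have Hp : nkle (nksub (kd lam) p') (kd lam) by nkle_tac.
  have Hkdrho : forall rho0, kd (act A rho0 (post lam (nksub (kd lam) p'))) = p'.
    move=> rho0; rewrite act_d; have [_ -> _ _] := prepost Hp; nkeq.
  exists (res A g lam, act A (res A g (pre lam (nksub (kd lam) p'))) (post lam (nksub (kd lam) p'))).
  split.
    split; [exact: Hkdrho | exact: C].
  move=> [h' mu'] /= [Hd Hc'].
  have C' : cycline A (act A (res A g (pre lam (nksub (kd lam) p'))) (post lam (nksub (kd lam) p')))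
     (res A g lam) nu' by [].
  have Hd' : kd (act A (res A g (pre lam (nksub (kd lam) p'))) (post lam (nksub (kd lam) p'))) = kd mu'.
    by rewrite Hkdrho Hd.
  by have [-> ->] := cyc_same_nu Hsf Hlf C' Hc' Hd'.
Qed.
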